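(* Let $n>2k$, $k\ge t+3$, and let $\mathcal F\subseteq\binom{[n]}{k}$ be a maximal $t$-intersecting family with $\tau_t(\mathcal F)=t+2$. Suppose there is $T\in\binom{[n]}{t}$ contained in every member of $\mathcal T_t(\mathcal F)$. Then $$|\mathcal T_t(\mathcal F)|\le (k-t)(k-t+1)+1.$$ Moreover, if equality holds, then $\mathcal F\setminus\mathcal F_T=\{G_1,G_2,G_3\}$ with $G_1=A\cup B$, $G_2=A\cup C$, $G_3=(T\cap A)\cup B\cup\{u\}$, where $u\in C$ and $A,B,C$ are pairwise disjoint subsets of $[n]$ with $|A|=t$, $|B|=|C|=k-t$, $|T\cap A|=t-1$ and $T\cap(B\cup C)=\emptyset$.
   Context: A family is $t$-intersecting if any two members meet in at least $t$ elements. A $t$-cover of a family $\mathcal F$ is a set $S\subseteq[n]$ with $|S\cap F|\ge t$ for all $F\in\mathcal F$; $\tau_t(\mathcal F)$ is the minimum size of a $t$-cover, and $\mathcal T_t(\mathcal F)$ denotes the set of all $t$-covers of $\mathcal F$ of size $\tau_t(\mathcal F)$. A $t$-intersecting family $\mathcal F\subseteq\binom{[n]}{k}$ is maximal if no $t$-intersecting subfamily of $\binom{[n]}{k}$ properly contains it. For $A\subseteq[n]$, $\mathcal F_A=\{F\in\mathcal F: A\subseteq F\}$. *)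

(* Defs.v *)
(* finite sets over 'I_n model subsets of [n]. *)
From mathcomp Require Import all_boot.
Set Implicit Arguments. Unset Strict Implicit. Unset Printing Implicit Defensive.

Section Families.
Variable n : nat.
Implicit Types (FF GG : {set {set 'I_n}}) (S A : {set 'I_n}).

Definition k_uniform (k : nat) FF : Prop := forall A, A \in FF -> #|A| = k.

Definition t_intersecting (t : nat) FF : Prop :=
  forall A B, A \in FF -> B \in FF -> t <= #|A :&: B|.

Definition is_tcover (t : nat) FF S : bool := [forall A in FF, t <= #|S :&: A|].

(* tau_t(FF): minimum size of a t-cover (n.+1 if there is none) *)
Definition tau_t (t : nat) FF : nat :=
  \big[minn/n.+1]_(S : {set 'I_n} | is_tcover t FF S) #|S|.

Definition TT_t (t : nat) FF : {set {set 'I_n}} :=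
  [set S | is_tcover t FF S & #|S| == tau_t t FF].

Definition maximal_t_intersecting (k t : nat) FF : Prop :=
  [/\ k_uniform k FF, t_intersecting t FF &
      forall GG, FF \proper GG -> k_uniform k GG -> ~ t_intersecting t GG].

Definition fam_at FF A : {set {set 'I_n}} := [set F in FF | A \subset F].

End Families.

(* Main.v *)
Require Import Defs.
From mathcomp Require Import all_boot.
From mathcomp Require Import zify.
Set Implicit Arguments. Unset Strict Implicit. Unset Printing Implicit Defensive.
Section Core.
Variable V : finType.
Implicit Types (P X Y Z : {set V}).

Lemma pair_eq P x y : #|P| = 2 -> x \in P -> y \in P -> x != y -> P = [set x; y].
Proof.
move=> cP xP yP xy; apply/eqP; rewrite eq_sym eqEcard cards2 xy cP leqnn andbT.
by apply/subsetP => z; rewrite !inE => /orP[]/eqP->.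
Qed.

Lemma card_bigcup_le (W I : finType) (A : {pred I}) (f : I -> {set W}) :
  #|\bigcup_(i in A) f i| <= \sum_(i in A) #|f i|.
Proof.
elim/big_rec2: _ => [|i s U _ hU]; first by rewrite cards0.
exact: leq_trans (leq_card_setU _ _) (leq_add (leqnn _) hU).
Qed.

Lemma sub_image_card (aT : finType) (f : aT -> {set V}) (D : {set {set V}}) (A : {set aT}) :
  D \subset f @: A -> #|D| <= #|A|.
Proof. by move=> s; exact: leq_trans (subset_leq_card s) (leq_imset_card _ _). Qed.

Lemma meetP P X : P :&: X != set0 -> exists2 z, z \in P & z \in X.
Proof. by case/set0Pn => z; rewrite inE => /andP[]; exists z. Qed.

Variables (r : nat) (H PP : {set {set V}}).
Hypotheses (r3 : 3 <= r)
 (h1 : forall X, X \in H -> #|X| = r)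
 (h2 : forall X Y, X \in H -> Y \in H -> X :&: Y != set0)
 (h3 : forall X w, X \in H -> w \in X -> exists2 Y, Y \in H & w \notin Y)
 (h4 : forall P, P \in PP -> #|P| = 2)
 (h5 : forall P X, P \in PP -> X \in H -> P :&: X != set0)
 (h6 : H != set0).

Lemma Dw_sub w Y : Y \in H -> w \notin Y ->
  [set P in PP | w \in P] \subset [set [set w; y] | y in Y].
Proof.
move=> YH wY; apply/subsetP => P; rewrite inE => /andP[PPP wP].
have [z zP zY] := meetP (h5 PPP YH).
have wz : w != z by apply: contraNneq wY => ->.
by rewrite (pair_eq (h4 PPP) wP zP wz); apply: imset_f.
Qed.

Lemma Dw_bound w Y : Y \in H -> w \notin Y -> #|[set P in PP | w \in P]| <= r.
Proof. by move=> YH wY; rewrite -(h1 YH); apply: sub_image_card (Dw_sub YH wY). Qed.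

Definition outpairs X1 X2 :=
  [set [set p.1; p.2] | p in setX (X1 :\: X2) (X2 :\: X1)].

Lemma out_sub X1 X2 : X1 \in H -> X2 \in H ->
  [set P in PP | P :&: (X1 :&: X2) == set0] \subset outpairs X1 X2.
Proof.
move=> H1 H2; apply/subsetP => P; rewrite inE => /andP[PPP /eqP PI].
have [x xP x1] := meetP (h5 PPP H1).
have [y yP y2] := meetP (h5 PPP H2).
have x2 : x \notin X2.
  by apply/negP => x2; move/setP: PI => /(_ x); rewrite !inE xP x1 x2.
have y1 : y \notin X1.
  by apply/negP => y1; move/setP: PI => /(_ y); rewrite !inE yP y1 y2.
have xy : x != y by apply: contraNneq x2 => ->.
rewrite (pair_eq (h4 PPP) xP yP xy).
by apply/imsetP; exists (x, y) => //; rewrite !inE x1 x2 y1 y2.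
Qed.

Lemma split_bound X1 X2 : X1 \in H -> X2 \in H ->
  #|PP| <= #|[set P in PP | P :&: (X1 :&: X2) != set0]| +
          #|[set P in PP | P :&: (X1 :&: X2) == set0]|.
Proof.
move=> _ _; rewrite -(cardsID [set P | P :&: (X1 :&: X2) != set0] PP).
apply: leq_add; apply: subset_leq_card; apply/subsetP => P; rewrite !inE.
  by case/andP => -> ->.
by case/andP; rewrite negbK => -> ->.
Qed.


Lemma exists_min_pair : exists X1, exists X2, [/\ X1 \in H, X2 \in H, X1 != X2 &
  forall Y1 Y2, Y1 \in H -> Y2 \in H -> Y1 != Y2 -> #|X1 :&: X2| <= #|Y1 :&: Y2|].
Proof.
have ex : exists i, [exists X1 in H, exists X2 in H, (X1 != X2) && (#|X1 :&: X2| == i)].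
  have [X1 X1H] := set0Pn _ h6.
  have : 0 < #|X1| by rewrite (h1 X1H); apply: leq_trans r3.
  case/card_gt0P => w wX1.
  have [Y YH wY] := h3 X1H wX1.
  exists #|X1 :&: Y|; apply/existsP; exists X1; rewrite X1H /=.
  apply/existsP; exists Y; rewrite YH eqxx andbT /=.
  by apply: contraNneq wY => <-.
case: (ex_minnP ex) => i /existsP[X1 /andP[X1H /existsP[X2 /and3P[X2H ne /eqP ci]]]] mn.
exists X1, X2; split => // Y1 Y2 Y1H Y2H ne'.
rewrite ci; apply: mn; apply/existsP; exists Y1; rewrite Y1H /=.
by apply/existsP; exists Y2; rewrite Y2H ne' eqxx.
Qed.

Lemma in_bound X1 X2 : X1 \in H -> X2 \in H ->
  #|[set P in PP | P :&: (X1 :&: X2) != set0]| <= #|X1 :&: X2| * r.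
Proof.
move=> H1 H2.
apply: (@leq_trans #|\bigcup_(w in X1 :&: X2) [set P in PP | w \in P]|).
  apply: subset_leq_card; apply/subsetP => P; rewrite inE => /andP[PPP].
  case/set0Pn => w; rewrite inE => /andP[wP wI].
  by apply/bigcupP; exists w => //; rewrite inE PPP.
apply: leq_trans; first exact: card_bigcup_le.
rewrite -sum_nat_const; apply: leq_sum => w; rewrite inE => /andP[w1 _].
have [Y YH wY] := h3 H1 w1.
exact: Dw_bound YH wY.
Qed.

Lemma outpairs_card X1 X2 :
  #|outpairs X1 X2| <= #|X1 :\: X2| * #|X2 :\: X1|.
Proof. by rewrite -cardsX; apply: leq_imset_card. Qed.

Lemma cardD_eq X1 X2 : X1 \in H -> X2 \in H -> #|X1 :\: X2| = r - #|X1 :&: X2|.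
Proof. by move=> H1 H2; rewrite cardsD h1. Qed.

Lemma cardD_eq' X1 X2 : X1 \in H -> X2 \in H -> #|X2 :\: X1| = r - #|X1 :&: X2|.
Proof. by move=> H1 H2; rewrite cardsD h1 // setIC. Qed.

Lemma inter_range X1 X2 : X1 \in H -> X2 \in H -> X1 != X2 ->
  0 < #|X1 :&: X2| < r.
Proof.
move=> H1 H2 ne; rewrite card_gt0 h2 //=.
have le : #|X1 :&: X2| <= r by rewrite -(h1 H1) subset_leq_card // subsetIl.
rewrite ltn_neqAle le andbT; apply/negP => /eqP e.
have : X1 :&: X2 == X1 by rewrite eqEcard subsetIl /= e h1.
move/eqP/setIidPl => sub; move: ne; rewrite eqEcard sub !h1 //. by rewrite leqnn.
Qed.

Lemma pair_bound X1 X2 : X1 \in H -> X2 \in H ->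
  #|PP| <= #|X1 :&: X2| * r + (r - #|X1 :&: X2|) * (r - #|X1 :&: X2|).
Proof.
move=> H1 H2; apply: leq_trans (split_bound H1 H2) _.
apply: leq_add; first exact: in_bound.
apply: leq_trans (subset_leq_card (out_sub H1 H2)) _.
by apply: leq_trans (outpairs_card _ _) _; rewrite cardD_eq // cardD_eq'.
Qed.

Lemma bin2_lt : 'C(r.+1, 2) < r * (r - 1) + 1.
Proof.
rewrite bin2 /=.
have E := odd_double_half (r.+1 * r).
have o : odd (r.+1 * r) <= 1 by case: (odd _).
rewrite -muln2 in E.
set h := (r.+1 * r)./2 in E *.
nia.
Qed.


Lemma big_case X1 X2 : X1 \in H -> X2 \in H -> X1 != X2 ->
  (forall Y1 Y2, Y1 \in H -> Y2 \in H -> Y1 != Y2 -> #|X1 :&: X2| <= #|Y1 :&: Y2|) ->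
  #|X1 :&: X2| = r - 1 -> #|PP| < r * (r - 1) + 1.
Proof.
move=> H1 H2 ne mn ci.
have cZ : #|X1 :|: X2| = r.+1 by rewrite cardsU (h1 H1) (h1 H2) ci; lia.
suff sub : PP \subset [set A : {set V} | A \subset X1 :|: X2 & #|A| == 2].
  apply: leq_ltn_trans (subset_leq_card sub) _; rewrite cards_draws cZ.
  exact: bin2_lt.
apply/subsetP => P PPP; rewrite inE h4 // eqxx andbT.
case: (boolP (P :&: (X1 :&: X2) == set0)) => [PI|].
  have : P \in outpairs X1 X2 by apply: (subsetP (out_sub H1 H2)); rewrite inE PPP PI.
  case/imsetP => -[x y]; rewrite !inE /= => /andP[/andP[_ x1] /andP[_ y2]] ->.
  by apply/subsetP => z; rewrite !inE => /orP[]/eqP->; rewrite ?x1 ?y2 ?orbT.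
case/set0Pn => w; rewrite !inE => /and3P[wP w1 w2].
have [Y YH wY] := h3 H1 w1.
have [z zP zY] := meetP (h5 PPP YH).
have wz : w != z by apply: contraNneq wY => ->.
rewrite (pair_eq (h4 PPP) wP zP wz).
apply/subsetP => x; rewrite !inE => /orP[]/eqP->; first by rewrite w1.
apply/negPn/negP => zZ.
have YX1 : X1 != Y by apply: contraNneq wY => <-.
have YX2 : X2 != Y by apply: contraNneq wY => <-.
have m1 := mn _ _ H1 YH YX1.
have m2 := mn _ _ H2 YH YX2.
have c := cardsUI (Y :&: X1) (Y :&: X2).
have s1 : (Y :&: X1) :|: (Y :&: X2) \subset Y :\ z.
  apply/subsetP => v; rewrite !inE => /orP[] /andP[xY xX]; rewrite xY andbT;
  by apply: contraNneq zZ => <-; rewrite xX ?orbT.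
have s2 : (Y :&: X1) :&: (Y :&: X2) \subset (X1 :&: X2) :\ w.
  apply/subsetP => v; rewrite !inE => /andP[/andP[xY x1] /andP[_ x2]].
  by rewrite x1 x2 /= !andbT; apply: contraNneq wY => <-.
have c1 := subset_leq_card s1.
have c2 := subset_leq_card s2.
have e1 := cardsD1 z Y; rewrite zY h1 // in e1.
have e2 := cardsD1 w (X1 :&: X2); rewrite inE w1 w2 ci in e2.
rewrite (setIC X1 Y) in m1; rewrite (setIC X2 Y) in m2.
move: m1 m2 c c1 c2 e1 e2 r3; rewrite ci.
move: #|Y :&: X1| #|Y :&: X2| #|Y :&: X1 :|: Y :&: X2| #|Y :&: X1 :&: (Y :&: X2)|.
move: #|Y :\ z| #|X1 :&: X2 :\ w| => a b c d e f.
clear; lia.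
Qed.


Lemma sym_struct Xa Xb Y w : Xa \in H -> Xb \in H -> Xa :&: Xb = [set w] ->
  Y \in H -> w \notin Y -> Xa :\: Xb \subset Y ->
  (forall X, X \in H -> [\/ X = Xa, X = Xb | X = Y]) ->
  exists u, [/\ u \in Xb, u != w & H = [set Xa; Xb; (Xa :\ w) :|: [set u]]].
Proof.
move=> HA HB eI YH wY sub alt.
have wI : w \in Xa :&: Xb by rewrite eI set11.
have wa : w \in Xa by move: wI; rewrite inE => /andP[].
have eD : Xa :\: Xb = Xa :\ w.
  apply/setP => x; rewrite !inE; case xa: (x \in Xa); rewrite ?andbF //= andbT.
  case xb: (x \in Xb) => /=.
    have : x \in Xa :&: Xb by rewrite inE xa xb.
    by rewrite eI inE => ->.
  by rewrite andbT; apply/esym; apply: contraFneq xb => ->; move: wI; rewrite inE => /andP[].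
rewrite eD in sub.
have cA : #|Xa :\ w| = r - 1 by have := cardsD1 w Xa; rewrite wa h1 //; lia.
have c1 : #|Y :\: (Xa :\ w)| == 1.
  rewrite cardsD (setIidPr sub) cA h1 //; lia.
case/cards1P: c1 => u eu.
have uD : u \in Y :\: (Xa :\ w) by rewrite eu set11.
have uY : u \in Y by move: uD; rewrite inE => /andP[].
have eY : Y = (Xa :\ w) :|: [set u].
  apply/setP => x; rewrite inE; apply/idP/idP.
    move=> xY; case xa: (x \in Xa :\ w) => //=.
    have : x \in Y :\: (Xa :\ w) by rewrite inE xa xY.
    by rewrite eu.
  by case/orP => [/(subsetP sub) | /set1P ->].
exists u; split.
- have [v vY vB] := meetP (h2 YH HB).
  have : v \in Y :\: (Xa :\ w).
    rewrite inE vY andbT; apply/negP; rewrite inE => /andP[vw va].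
    have : v \in Xa :&: Xb by rewrite inE va vB.
    by rewrite eI (negbTE vw).
  by rewrite eu inE => /eqP <-.
- by apply: contraNneq wY => <-.
- rewrite -eY; apply/setP => X; rewrite !inE; apply/idP/idP.
    by move=> XH; case: (alt X XH) => ->; rewrite eqxx ?orbT.
  by case/orP => [/orP[] /eqP -> | /eqP ->].
Qed.


Definition core_concl := exists X1, exists X2, exists w, exists u,
  [/\ X1 \in H, X2 \in H, X1 :&: X2 = [set w], u \in X2 &
      u != w /\ H = [set X1; X2; (X1 :\ w) :|: [set u]]].

Lemma one_case X1 X2 w : X1 \in H -> X2 \in H -> X1 :&: X2 = [set w] ->
  #|PP| = r * (r - 1) + 1 -> core_concl.
Proof.
move=> H1 H2 eI cPP.
have wI : w \in X1 :&: X2 by rewrite eI set11.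
have [w1 w2] : w \in X1 /\ w \in X2 by move: wI; rewrite inE => /andP[].
have [Y YH wY] := h3 H1 w1.
set Dw := [set P in PP | w \in P].
set PPo := [set P in PP | P :&: (X1 :&: X2) == set0].
have sb := split_bound H1 H2.
have s1 : [set P in PP | P :&: (X1 :&: X2) != set0] \subset Dw.
  apply/subsetP => P; rewrite !inE => /andP[PPP]; rewrite eI PPP /=.
  by case/set0Pn => v; rewrite !inE => /andP[vP /eqP <-].
have c1 := subset_leq_card s1.
have s2 := Dw_sub YH wY.
have c2 := subset_leq_card s2.
have c3 : #|[set [set w; y] | y in Y]| <= r by rewrite -(h1 YH) leq_imset_card.
have s4 := out_sub H1 H2.
have c4 := subset_leq_card s4.
have c5 := outpairs_card X1 X2.
have eI1 : #|X1 :&: X2| = 1 by rewrite eI cards1.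
rewrite cardD_eq // cardD_eq' // eI1 in c5.
have eDw : Dw = [set [set w; y] | y in Y].
  apply/eqP; rewrite eqEcard s2 /=.
  move: sb c1 c2 c3 c4 c5 r3; rewrite cPP.
  move: #|[set _ in PP | _]| #|Dw| #|PPo| #|outpairs X1 X2|.
  move: #|[set [set w; y] | y in Y]| => a b c d e; clear; lia.
have ePo : PPo = outpairs X1 X2.
  apply/eqP; rewrite eqEcard s4 /=.
  move: sb c1 c2 c3 c4 c5 r3; rewrite cPP.
  move: #|[set _ in PP | _]| #|Dw| #|PPo| #|outpairs X1 X2|.
  move: #|[set [set w; y] | y in Y]| => a b c d e; clear; lia.
have pw : forall y, y \in Y -> [set w; y] \in PP.
  move=> y yY; have : [set w; y] \in Dw by rewrite eDw; apply: (imset_f (fun y => [set w; y])).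
  by rewrite inE => /andP[].
have pxy : forall x y, x \in X1 :\: X2 -> y \in X2 :\: X1 -> [set x; y] \in PP.
  move=> x y xD yD; have : [set x; y] \in PPo.
    by rewrite ePo; apply/imsetP; exists (x, y) => //; rewrite inE xD yD.
  by rewrite inE => /andP[].
have cover : forall X, X \in H -> (X1 :\: X2 \subset X) || (X2 :\: X1 \subset X).
  move=> X XH; apply/negPn/negP; rewrite negb_or => /andP[].
  case/subsetPn => x xD xX; case/subsetPn => y yD yX.
  have [v vP vX] := meetP (h5 (pxy _ _ xD yD) XH).
  by move: vP; rewrite !inE => /orP[] /eqP ev; move: vX; rewrite ev ?(negbTE xX) ?(negbTE yX).
have altY : forall X, X \in H -> w \notin X -> X = Y.
  move=> X XH wX; apply/eqP; rewrite eq_sym eqEcard !h1 // leqnn andbT.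
  apply/subsetP => y yY; have [v vP vX] := meetP (h5 (pw _ yY) XH).
  move: vP; rewrite !inE => /orP[] /eqP ev; move: vX; rewrite ev //.
  by rewrite (negbTE wX).
have altW : forall X Xa Xb, X \in H -> Xa \in H -> Xa :&: Xb = [set w] ->
    w \in X -> Xa :\: Xb \subset X -> X = Xa.
  move=> X Xa Xb XH HA eab wX sub; apply/eqP; rewrite eq_sym eqEcard !h1 // leqnn andbT.
  apply/subsetP => x xa; case xb: (x \in Xb).
    have : x \in Xa :&: Xb by rewrite inE xa xb.
    by rewrite eab inE => /eqP ->.
  by apply: (subsetP sub); rewrite inE xa xb.
have alt : forall X, X \in H -> [\/ X = X1, X = X2 | X = Y].
  move=> X XH; case wX: (w \in X); last by apply: Or33; apply: altY; rewrite ?wX.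
  case/orP: (cover X XH) => sub.
    by apply: Or31; apply: (altW X X1 X2).
  by apply: Or32; apply: (altW X X2 X1); rewrite // setIC.
case/orP: (cover Y YH) => sub.
  have [u [uX2 uw eH]] := sym_struct H1 H2 eI YH wY sub alt.
  by exists X1, X2, w, u.
have alt' : forall X, X \in H -> [\/ X = X2, X = X1 | X = Y].
  by move=> X XH; case: (alt X XH) => ->; [apply: Or32 | apply: Or31 | apply: Or33].
have eI' : X2 :&: X1 = [set w] by rewrite setIC.
have [u [uX1 uw eH]] := sym_struct H2 H1 eI' YH wY sub alt'.
by exists X2, X1, w, u; rewrite eI'.
Qed.


Theorem core_thm : #|PP| <= r * (r - 1) + 1 /\ (#|PP| = r * (r - 1) + 1 -> core_concl).
Proof.
have [X1 [X2 [H1 H2 ne mn]]] := exists_min_pair.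
have /andP[i0 ir] := inter_range H1 H2 ne.
have b := pair_bound H1 H2.
have bnd : #|PP| <= r * (r - 1) + 1.
  move: b i0 ir r3; move: #|PP| #|X1 :&: X2| => p i; clear; nia.
split => // e.
case: (ltnP 1 #|X1 :&: X2|) => [i2 | i1].
  have ieq : #|X1 :&: X2| = r - 1.
    move: b i2 ir r3 e; move: #|PP| #|X1 :&: X2| => p i; clear => b i2 ir r3 e.
    subst p; nia.
  by have := big_case H1 H2 ne mn ieq; rewrite e ltnn.
have : #|X1 :&: X2| == 1 by rewrite eqn_leq i1 i0.
case/cards1P => w eI.
exact: (one_case H1 H2 eI e).
Qed.

End Core.

Lemma bin2_lt3 r : 3 <= r -> 'C(r.+1, 2) < r * (r - 1) + 1.
Proof.
move=> r3; rewrite bin2 /=.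
have E := odd_double_half (r.+1 * r).
have o : odd (r.+1 * r) <= 1 by case: (odd _).
rewrite -muln2 in E.
set h := (r.+1 * r)./2 in E *.
nia.
Qed.

Lemma bigmin_le (X : eqType) (s : seq X) (P : pred X) (f : X -> nat) m x :
  x \in s -> P x -> \big[minn/m]_(i <- s | P i) f i <= f x.
Proof.
elim: s => //= y s IH; rewrite inE big_cons => /orP[/eqP <- -> | xs Px].
  exact: geq_minl.
case: (P y); last exact: IH.
exact: leq_trans (geq_minr _ _) (IH xs Px).
Qed.

Section Main.
Variables (n k t : nat) (F : {set {set 'I_n}}) (T : {set 'I_n}).
Hypotheses (hk : t + 3 <= k) (kU : k_uniform k F) (tI : t_intersecting t F)
  (htau : tau_t t F = t + 2) (hT : #|T| = t)
  (hsub : forall S, S \in TT_t t F -> T \subset S).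

Let FF' := F :\: fam_at F T.

Lemma inF' (G : {set 'I_n}) : (G \in FF') = (G \in F) && ~~ (T \subset G).
Proof. by rewrite /FF' !inE; case: (G \in F); rewrite ?andbF ?andbT. Qed.

Lemma tau_le (S : {set 'I_n}) : is_tcover t F S -> t + 2 <= #|S|.
Proof.
move=> cS; rewrite -htau /tau_t.
apply: bigmin_le => //; exact: mem_index_enum.
Qed.

Lemma TT_cover (S G : {set 'I_n}) : S \in TT_t t F -> G \in F -> t <= #|S :&: G|.
Proof.
rewrite inE => /andP[/forallP cS _] GF.
by have := cS G; rewrite GF.
Qed.

Lemma TT_card (S : {set 'I_n}) : S \in TT_t t F -> #|S| = t + 2.
Proof. by rewrite inE => /andP[_ /eqP ->]. Qed.

Lemma not_cover (S : {set 'I_n}) : #|S| <= t + 1 -> exists2 G, G \in F & #|S :&: G| < t.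
Proof.
move=> cS; case cov: (is_tcover t F S).
  by have := tau_le cov; lia.
move/negbT: cov; rewrite /is_tcover negb_forall => /existsP[G].
by rewrite negb_imply -ltnNge => /andP[GF lt]; exists G.
Qed.

Lemma notT_lt (G : {set 'I_n}) : G \in F -> ~~ (T \subset G) -> #|T :&: G| < t.
Proof.
move=> GF nTG; rewrite -hT ltn_neqAle subset_leq_card ?subsetIl // andbT.
apply: contra nTG => /eqP e.
have : T :&: G == T by rewrite eqEcard subsetIl e leqnn.
by move/eqP/setIidPl.
Qed.

Lemma T_lt_F' (G : {set 'I_n}) : G \in FF' -> #|T :&: G| < t.
Proof. by rewrite inF' => /andP[GF nTG]; apply: notT_lt. Qed.

Lemma F'_nonempty : exists G, G \in FF'.
Proof.
have [G GF lt] := not_cover (S := T) ltac:(by rewrite hT; lia).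
exists G; rewrite inF' GF /=; apply: contraTN lt => TG.
by rewrite -leqNgt -hT (setIidPl TG).
Qed.

Lemma split_card (S G : {set 'I_n}) : T \subset S -> #|S :&: G| <= #|T :&: G| + #|(S :\: T) :&: G|.
Proof.
move=> TS; apply: leq_trans (leq_card_setU _ _).
apply: subset_leq_card; apply/subsetP => x; rewrite !inE.
by case/andP => -> ->; case: (x \in T).
Qed.

Lemma PT_card (S : {set 'I_n}) : S \in TT_t t F -> #|S :\: T| = 2.
Proof.
move=> ST; rewrite cardsD (setIidPr (hsub ST)) TT_card // hT; lia.
Qed.

Lemma TUD (S : {set 'I_n}) : T \subset S -> T :|: (S :\: T) = S.
Proof.
move=> TS; apply/setP => x; rewrite !inE.
case xT: (x \in T) => //=.
by rewrite (subsetP TS).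
Qed.

Lemma card_PP : #|[set S :\: T | S in TT_t t F]| = #|TT_t t F|.
Proof.
apply: card_in_imset => S1 S2 H1 H2 e.
by rewrite -(TUD (hsub H1)) -(TUD (hsub H2)) e.
Qed.


Lemma case_small (G0 : {set 'I_n}) : G0 \in FF' -> #|T :&: G0| < t - 1 ->
  #|TT_t t F| < (k - t + 1) * (k - t + 1 - 1) + 1.
Proof.
move=> G0F' lt.
have G0F : G0 \in F by move: G0F'; rewrite inF' => /andP[].
have [E|[S0 S0T]] := set_0Vmem (TT_t t F).
  by rewrite E cards0 addn1.

have lb : t <= #|T :&: G0| + 2.
  have := split_card G0 (hsub S0T); have := TT_cover S0T G0F.
  have := subset_leq_card (subsetIl (S0 :\: T) G0); rewrite PT_card //; lia.
have cG : #|G0 :\: T| <= (k - t + 1).+1.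
  by rewrite cardsD setIC (kU G0F); lia.
have sub : [set S :\: T | S in TT_t t F] \subset
           [set A : {set 'I_n} | A \subset G0 :\: T & #|A| == 2].
  apply/subsetP => P /imsetP[S ST ->]; rewrite inE PT_card // eqxx andbT.
  have h := split_card G0 (hsub ST); have tc := TT_cover ST G0F.
  have c := subset_leqif_cards (subsetIl (S :\: T) G0).
  have e : (S :\: T) :&: G0 = S :\: T.
    apply/eqP; rewrite -(eq_leqif c) eqn_leq c /= PT_card //; move: h tc lt; move: #|S :&: G0| #|T :&: G0| #|(S :\: T) :&: G0| => a b d; lia.
  apply/subsetP => x xP; rewrite inE.
  have : x \in (S :\: T) :&: G0 by rewrite e.
  by rewrite !inE => /andP[/andP[-> _] ->].
rewrite -card_PP; apply: leq_ltn_trans (subset_leq_card sub) _.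
rewrite cards_draws; apply: leq_ltn_trans (leq_bin2l _ cG) _.
apply: bin2_lt3; lia.
Qed.


Section Big.
Hypothesis ht1 : forall G, G \in FF' -> t - 1 <= #|T :&: G|.

Lemma t_pos : 0 < t.
Proof. by have [G GF] := F'_nonempty; have := T_lt_F' GF; lia. Qed.

Lemma eqT G : G \in FF' -> #|T :&: G| = t - 1.
Proof. by move=> GF; have := T_lt_F' GF; have := ht1 GF; lia. Qed.

Lemma F'F G : G \in FF' -> G \in F.
Proof. by rewrite inF' => /andP[]. Qed.

Lemma cardX G : G \in FF' -> #|G :\: T| = k - t + 1.
Proof.
move=> GF; rewrite cardsD setIC eqT // (kU (F'F GF)); have := t_pos; lia.
Qed.

Lemma DI (A B : {set 'I_n}) : (A :\: T) :&: (B :\: T) = (A :&: B) :\: T.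
Proof.
apply/setP => x; rewrite !inE; case: (x \in T) => //=; case: (x \in A); rewrite ?andbF.
Qed.

Lemma inter_lb G1 G2 : G1 \in FF' -> G2 \in FF' ->
  t <= #|T :&: (G1 :&: G2)| + #|(G1 :\: T) :&: (G2 :\: T)|.
Proof.
move=> H1 H2; rewrite DI.
have := tI (F'F H1) (F'F H2).
have := cardsID T (G1 :&: G2); rewrite setIC; lia.
Qed.

Lemma sameT G1 G2 : G1 \in FF' -> G2 \in FF' ->
  #|(G1 :\: T) :&: (G2 :\: T)| <= 1 -> T :&: G1 = T :&: G2.
Proof.
move=> H1 H2 le1; have lb := inter_lb H1 H2.
have s1 : T :&: (G1 :&: G2) \subset T :&: G1 by rewrite setIA subsetIl.
have s2 : T :&: (G1 :&: G2) \subset T :&: G2 by rewrite setICA subsetIr.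
have e1 : T :&: (G1 :&: G2) = T :&: G1.
  apply/eqP; rewrite eqEcard s1 (eqT H1) /=; move: lb le1.
  move: #|T :&: (G1 :&: G2)| #|(G1 :\: T) :&: (G2 :\: T)| => a b; lia.
have e2 : T :&: (G1 :&: G2) = T :&: G2.
  apply/eqP; rewrite eqEcard s2 (eqT H2) /=; move: lb le1.
  move: #|T :&: (G1 :&: G2)| #|(G1 :\: T) :&: (G2 :\: T)| => a b; lia.
by rewrite -e1 -e2.
Qed.

Let H := [set G :\: T | G in FF'].
Let PP := [set S :\: T | S in TT_t t F].

Lemma hyp1 X : X \in H -> #|X| = k - t + 1.
Proof. by case/imsetP => G GF ->; apply: cardX. Qed.

Lemma hyp2 X Y : X \in H -> Y \in H -> X :&: Y != set0.
Proof.
case/imsetP => G1 H1 ->; case/imsetP => G2 H2 ->.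
have lb := inter_lb H1 H2.
have : #|T :&: (G1 :&: G2)| <= t - 1.
  by rewrite -(eqT H1); apply: subset_leq_card; rewrite setIA subsetIl.
rewrite -card_gt0; have := t_pos; move: lb.
move: #|T :&: (G1 :&: G2)| #|(G1 :\: T) :&: (G2 :\: T)| => a b; lia.
Qed.

Lemma hyp3 X w : X \in H -> w \in X -> exists2 Y, Y \in H & w \notin Y.
Proof.
case/imsetP => G GF -> wX.
have wT : w \notin T by move: wX; rewrite inE => /andP[].
have [G' G'F lt] := not_cover (S := w |: T) ltac:(by rewrite cardsU1 wT hT; lia).
have G'F' : G' \in FF'.
  rewrite inF' G'F /=. apply: contraTN lt => TG; rewrite -leqNgt -hT.
  by apply: subset_leq_card; apply/subsetP => x xT; rewrite !inE xT (subsetP TG x xT) orbT.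
exists (G' :\: T); first exact: imset_f.
rewrite inE wT /=; apply: contraTN lt => wG; rewrite -leqNgt.
have : w |: (T :&: G') \subset (w |: T) :&: G'.
  apply/subsetP => x; rewrite !inE => /orP[/eqP -> | /andP[-> ->]]; rewrite ?eqxx ?wG ?orbT //.
move/subset_leq_card; rewrite cardsU1 inE (negbTE wT) eqT //; have := t_pos; lia.
Qed.

Lemma hyp4 P : P \in PP -> #|P| = 2.
Proof. by case/imsetP => S ST ->; apply: PT_card. Qed.

Lemma hyp5 P X : P \in PP -> X \in H -> P :&: X != set0.
Proof.
case/imsetP => S ST ->; case/imsetP => G GF ->.
have h := split_card G (hsub ST); have tc := TT_cover ST (F'F GF).
have : (S :\: T) :&: (G :\: T) = (S :\: T) :&: G.
  apply/setP => x; rewrite !inE; by case: (x \in T); rewrite ?andbF.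
move=> ->; rewrite -card_gt0; move: h tc; rewrite eqT //.
have := t_pos; move: #|S :&: G| #|(S :\: T) :&: G| => a b; lia.
Qed.

Lemma hyp6 : H != set0.
Proof. by have [G GF] := F'_nonempty; apply/set0Pn; exists (G :\: T); apply: imset_f. Qed.

Lemma big_core : #|TT_t t F| <= (k - t + 1) * (k - t + 1 - 1) + 1 /\
  (#|TT_t t F| = (k - t + 1) * (k - t + 1 - 1) + 1 -> core_concl H).
Proof.
rewrite -card_PP.
apply: (core_thm _ hyp1 hyp2 hyp3 hyp4 hyp5 hyp6); lia.
Qed.


Lemma decomp (G : {set 'I_n}) : G = (T :&: G) :|: (G :\: T).
Proof. by apply/setP => x; rewrite !inE; case: (x \in T); rewrite /= ?orbF. Qed.

Lemma memT (G G' : {set 'I_n}) x : T :&: G = T :&: G' -> x \in T -> (x \in G) = (x \in G').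
Proof. by move=> e xT; move/setP: e => /(_ x); rewrite !inE xT /= => ->. Qed.

Lemma memD (G : {set 'I_n}) X x : G :\: T = X -> x \notin T -> (x \in G) = (x \in X).
Proof. by move=> e xT; move/setP: e => /(_ x); rewrite !inE (negbTE xT) /= => ->. Qed.

Lemma big_struct : core_concl H ->
   exists (A B C : {set 'I_n}) (u : 'I_n),
     [/\ [disjoint A & B], [disjoint A & C] & [disjoint B & C]] /\
     [/\ #|A| = t, #|B| = k - t, #|C| = k - t & #|T :&: A| = t.-1] /\
     [/\ T :&: (B :|: C) = set0, u \in C &
         F :\: fam_at F T =
           [set A :|: B; A :|: C; (T :&: A) :|: B :|: [set u]]].
Proof.
case=> X1 [X2 [w [u [X1H X2H eI uX2 [uw eH]]]]].
have X3H : (X1 :\ w) :|: [set u] \in H by rewrite eH !inE eqxx orbT.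
case/imsetP: X1H => G1 H1 eX1; case/imsetP: X2H => G2 H2 eX2.
case/imsetP: X3H => G3 H3 eX3.
subst X1 X2.
have wI : w \in (G1 :\: T) :&: (G2 :\: T) by rewrite eI set11.
have [wT [wG1 wG2]] : w \notin T /\ w \in G1 /\ w \in G2.
  by move: wI; rewrite !inE => /andP[/andP[-> ->] /andP[_ ->]].
have [uT uG2] : u \notin T /\ u \in G2 by move: uX2; rewrite !inE => /andP[-> ->].
have c12 : #|(G1 :\: T) :&: (G2 :\: T)| <= 1 by rewrite eI cards1.
have e12 := sameT H1 H2 c12.
have c32 : #|(G3 :\: T) :&: (G2 :\: T)| <= 1.
  rewrite -eX3 -(cards1 u); apply: subset_leq_card; apply/subsetP => x.
  move=> /setIP[/setUP[xD|//] x2].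
  have /setD1P[xw x1] := xD.
  have : x \in (G1 :\: T) :&: (G2 :\: T) by rewrite inE x1 x2.
  by rewrite eI inE (negbTE xw).
have e32 := sameT H3 H2 c32.
have e31 : T :&: G3 = T :&: G1 by rewrite e32 e12.
have allG : forall G, G \in FF' -> [\/ G = G1, G = G2 | G = G3].
  move=> G GF.
  have : G :\: T \in H by apply: imset_f.
  rewrite eH !inE => /orP[/orP[]|] /eqP eG.
  - apply: Or31; rewrite (decomp G) (decomp G1) eG; congr (_ :|: _).
    by rewrite (sameT GF H2) ?e12 // eG c12.
  - apply: Or32; rewrite (decomp G) (decomp G2) eG; congr (_ :|: _).
    by rewrite (sameT GF H1) ?e12 // eG setIC c12.
  - apply: Or33; rewrite (decomp G) (decomp G3) eG eX3; congr (_ :|: _).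
    by rewrite (sameT GF H2) ?e32 // eG eX3 c32.
set T0 := T :&: G1.
have cT0 : #|T0| = t - 1 by apply: eqT.
have tp := t_pos.
have k1 := cardX H1; have k2 := cardX H2.
exists (w |: T0), ((G1 :\: T) :\ w), ((G2 :\: T) :\ w), u.
split; [|split].
- split; rewrite -setI_eq0; apply/eqP/setP => x.
  + by rewrite !inE; case: (x == w); case: (x \in T); rewrite /= ?andbF.
  + by rewrite !inE; case: (x == w); case: (x \in T); rewrite /= ?andbF.
  + rewrite inE [x \in set0]inE; apply/negP => /andP[/setD1P[xw x1] /setD1P[_ x2]].
    have : x \in (G1 :\: T) :&: (G2 :\: T) by rewrite inE x1 x2.
    by rewrite eI inE (negbTE xw).
- split.
  + rewrite cardsU1 /T0 inE (negbTE wT) cT0; lia.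
  + have := cardsD1 w (G1 :\: T); rewrite inE wT wG1 k1; lia.
  + have := cardsD1 w (G2 :\: T); rewrite inE wT wG2 k2; lia.
  + have -> : T :&: (w |: T0) = T0.
      apply/setP => x; rewrite /T0 !inE.
      by case: (eqVneq x w) => [->|]; rewrite ?(negbTE wT) //= andbA andbb.
    by rewrite cT0 subn1.
- split.
  + by apply/setP => x; rewrite !inE; case: (x \in T); rewrite /= ?andbF.
  + by rewrite !inE uw uT uG2.
  have eAB : w |: T0 :|: (G1 :\: T) :\ w = G1.
    apply/setP => x; rewrite /T0 !inE; case: (eqVneq x w) => [->|xw]; first by rewrite /= wG1.
    by rewrite /=; case: (x \in T); rewrite /= ?andbT ?orbF.
  have eAC : w |: T0 :|: (G2 :\: T) :\ w = G2.
    apply/setP => x; rewrite /T0 !inE; case: (eqVneq x w) => [->|xw]; first by rewrite /= wG2.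
    rewrite /=; case xT: (x \in T); rewrite /= ?andbT ?orbF //.
    by rewrite (memT e12 xT).
  have eT : T :&: (w |: T0) :|: (G1 :\: T) :\ w :|: [set u] = G3.
    apply/setP => x; case xT: (x \in T).
      rewrite (memT e31 xT) /T0 !inE xT /=.
      case: (eqVneq x w) => [e|xw]; first by move: xT; rewrite e (negbTE wT).
      case: (eqVneq x u) => [e|xu]; first by move: xT; rewrite e (negbTE uT).
      by rewrite /= ?andbF ?orbF.
    rewrite (memD (esym eX3) (negbT xT)) /T0 !inE xT /=.
    by case: (x == w); rewrite /= ?andbF ?orbF.
  rewrite eAB eAC eT.
  apply/eqP; rewrite eqEsubset; apply/andP; split; apply/subsetP => G.
    by move=> GF; case: (allG G GF) => ->; rewrite !inE eqxx ?orbT.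
  rewrite !inE => /orP[/orP[]|] /eqP ->.
  + by move: H1; rewrite inF' => /andP[-> ->].
  + by move: H2; rewrite inF' => /andP[-> ->].
  + by move: H3; rewrite inF' => /andP[-> ->].
Qed.

End Big.

Lemma final_main :
  #|TT_t t F| <= (k - t) * (k - t + 1) + 1 /\
  (#|TT_t t F| = (k - t) * (k - t + 1) + 1 ->
   exists (A B C : {set 'I_n}) (u : 'I_n),
     [/\ [disjoint A & B], [disjoint A & C] & [disjoint B & C]] /\
     [/\ #|A| = t, #|B| = k - t, #|C| = k - t & #|T :&: A| = t.-1] /\
     [/\ T :&: (B :|: C) = set0, u \in C &
         F :\: fam_at F T =
           [set A :|: B; A :|: C; (T :&: A) :|: B :|: [set u]]]).
Proof.
have er : (k - t) * (k - t + 1) + 1 = (k - t + 1) * (k - t + 1 - 1) + 1.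
  by rewrite addnK mulnC.
rewrite er.
case: (boolP [exists G in FF', #|T :&: G| < t - 1]).
  case/existsP => G0 /andP[G0F lt].
  have := case_small G0F lt => s; split; first exact: ltnW.
  by move=> e; rewrite e ltnn in s.
rewrite negb_exists => /forallP ht.
have ht1 : forall G, G \in FF' -> t - 1 <= #|T :&: G|.
  by move=> G GF; have := ht G; rewrite GF /= -leqNgt.
have [b1 b2] := big_core ht1.
split => // e.
exact: big_struct ht1 (b2 e).
Qed.

End Main.

Theorem proposition2p2 (n k t : nat) (F : {set {set 'I_n}}) (T : {set 'I_n}) :
  2 * k < n -> t + 3 <= k ->
  maximal_t_intersecting k t F ->
  tau_t t F = t + 2 ->
  #|T| = t ->
  (forall S, S \in TT_t t F -> T \subset S) ->
  #|TT_t t F| <= (k - t) * (k - t + 1) + 1 /\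
  (#|TT_t t F| = (k - t) * (k - t + 1) + 1 ->
   exists (A B C : {set 'I_n}) (u : 'I_n),
     [/\ [disjoint A & B], [disjoint A & C] & [disjoint B & C]] /\
     [/\ #|A| = t, #|B| = k - t, #|C| = k - t & #|T :&: A| = t.-1] /\
     [/\ T :&: (B :|: C) = set0, u \in C &
         F :\: fam_at F T =
           [set A :|: B; A :|: C; (T :&: A) :|: B :|: [set u]]]).
Proof.
move=> _ hk [kU tI _] htau hT hsub.
exact: final_main.
Qed.
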